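(* For all $T_0 \in \mathcal{G}(X)$, $\mathcal{S}_{T_0} \subset \mathcal{G}_{T_0}\setminus\mathcal{R}_{T_0}$; that is, no strongly mixing extension of $T_0$ is a rigid extension of $T_0$.
   Context: Let $(X,m)$ and $(Y,\nu)$ both be the unit interval with Lebesgue measure, and $(Z,\mu) = (X\times Y, m\times\nu)$. $\mathcal{G}(W)$ denotes the set of invertible measure-preserving transformations of a space $W$. $\mathcal{G}_{T_0} \subset \mathcal{G}(Z)$ is the set of transformations of the form $T(x,y) = (T_0x, T_x y)$ with $T_x \in \mathcal{G}(Y)$ (extensions of $T_0$); $T_0$ is identified with $T_0\times\mathrm{id}_Y$ on $Z$. For $f$ on $Z$, $T^nf = f\circ T^n$. $\mathbb{E}(\cdot|X)$ is conditional expectation onto the $\sigma$-algebra of sets $B\times Y$. $L^2(Z|X)$ is the space of $f\in L^2(Z)$ with $\mathbb{E}(|f|^2|X)^{1/2} \in L^\infty(X)$. $T\in\mathcal{G}_{T_0}$ is a strongly mixing extension of $T_0$ if for all $f,g\in L^2(Z|X)$, $\lim_{n\to\infty}\|\mathbb{E}(T^n f\cdot\overline{g}|X) - T_0^n\mathbb{E}(f|X)\mathbb{E}(\overline{g}|X)\|_{L^2(X)} = 0$; $\mathcal{S}_{T_0}$ is the set of such extensions. $T\in\mathcal{G}_{T_0}$ is a rigid extension of $T_0$ if there is a subsequence $n_k$ such that for all $f,g\in L^2(Z|X)$, $\lim_{k\to\infty}\|\mathbb{E}(T^{n_k}f\cdot\overline{g}|X) - \mathbb{E}(T_0^{n_k}f\cdot\overline{g}|X)\|_{L^2(X)}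 = 0$; $\mathcal{R}_{T_0}$ is the set of rigid extensions. *)

(* Defs.v *)
From HB Require Import structures.
From mathcomp Require Import all_boot all_order all_algebra.
From mathcomp Require Import all_classical all_reals all_analysis.
From mathcomp Require Import complex.
Set Implicit Arguments. Unset Strict Implicit. Unset Printing Implicit Defensive.
Import Order.TTheory GRing.Theory Num.Theory.
Local Open Scope classical_set_scope.
Local Open Scope ring_scope.

Section Defs.
Context {R : realType}.
Local Notation C := (R[i]).

Definition unit_itv : set R := `[0%R, 1%R].

(* X = Y = [0,1] with Lebesgue measure, realised on the carrier R with
   Lebesgue measure restricted to [0,1] (points outside [0,1] are null). *)
Definition mX (A : set R) : \bar R := lebesgue_measure (A `&` unit_itv).

(* Z = X x Y with the product measure m x nu, realised on R * R. *)
Definition mZ (A : set (R * R)) : \bar R :=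
  (lebesgue_measure \x lebesgue_measure) (A `&` (unit_itv `*` unit_itv)).

Definition null_set d (W : measurableType d) (m : set W -> \bar R) (N : set W) :=
  exists M, [/\ measurable M, m M = 0%E & N `<=` M].

Definition measure_preserving d (W : measurableType d) (m : set W -> \bar R)
    (T : W -> W) :=
  measurable_fun setT T /\
  forall A, measurable A -> m (T @^-1` A) = m A.

Definition inv_mpt d (W : measurableType d) (m : set W -> \bar R) (T : W -> W) :=
  measure_preserving m T /\
  exists S : W -> W, [/\ measure_preserving m S,
     null_set m [set w | S (T w) <> w] & null_set m [set w | T (S w) <> w]].

Definition extension (T0 : R -> R) (T : R * R -> R * R) :=
  inv_mpt mZ T /\
  exists Tx : R -> R -> R,
    (forall x, unit_itv x -> inv_mpt mX (Tx x)) /\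
    (forall x y, unit_itv x -> unit_itv y -> T (x, y) = (T0 x, Tx x y)).

(* T0 identified with T0 x id_Y on Z *)
Definition liftX (T0 : R -> R) : R * R -> R * R := fun w => (T0 w.1, w.2).

Definition csq (z : C) : R := complex.Re z ^+ 2 + complex.Im z ^+ 2.

Definition cmeasurable d (W : measurableType d) (f : W -> C) :=
  measurable_fun setT (fun w => complex.Re (f w)) /\ measurable_fun setT (fun w => complex.Im (f w)).

(* E(h | X)(x) = \int_Y h(x, y) dnu(y)  (conditional expectation onto the
   sigma-algebra {B x Y}, computed fibrewise by Fubini). *)
Definition condE (h : R * R -> C) (x : R) : C :=
  ((Rintegral lebesgue_measure unit_itv (fun y => complex.Re (h (x, y))))
  +i* (Rintegral lebesgue_measure unit_itv (fun y => complex.Im (h (x, y)))))%C.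

Definition L2Z (f : R * R -> C) :=
  cmeasurable f /\
  (\int[lebesgue_measure \x lebesgue_measure]_(w in unit_itv `*` unit_itv)
      (csq (f w))%:E < +oo)%E.

(* f in L^2(Z|X): f in L^2(Z) and E(|f|^2 | X)^{1/2} in L^oo(X),
   i.e. x |-> \int_Y |f(x,y)|^2 dy is essentially bounded on X. *)
Definition L2ZX (f : R * R -> C) :=
  L2Z f /\
  exists M : R, exists N : set R, null_set mX N /\
    forall x, unit_itv x -> ~ N x ->
      (\int[lebesgue_measure]_(y in unit_itv) (csq (f (x, y)))%:E <= M%:E)%E.

Definition L2sqX (u : R -> C) : \bar R :=
  (\int[lebesgue_measure]_(x in unit_itv) (csq (u x))%:E)%E.

Definition strongly_mixing_ext (T0 : R -> R) (T : R * R -> R * R) :=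
  extension T0 T /\
  forall f g, L2ZX f -> L2ZX g ->
    (fun n : nat =>
       L2sqX (fun x => condE (fun w => f (iter n T w) * (g w)^*) x
                       - condE f (iter n T0 x) * condE (fun w => (g w)^*) x))
      @ \oo --> 0%E.

Definition rigid_ext (T0 : R -> R) (T : R * R -> R * R) :=
  extension T0 T /\
  exists nk : nat -> nat, (forall k, (nk k < nk k.+1)%N) /\
  forall f g, L2ZX f -> L2ZX g ->
    (fun k : nat =>
       L2sqX (fun x => condE (fun w => f (iter (nk k) T w) * (g w)^*) x
                       - condE (fun w => f (iter (nk k) (liftX T0) w) * (g w)^*) x))
      @ \oo --> 0%E.

End Defs.

(* Main.v *)
Require Import Defs.
From HB Require Import structures.
From mathcomp Require Import all_boot all_order all_algebra.
From mathcomp Require Import all_classical all_reals all_analysis.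
From mathcomp Require Import complex.
From mathcomp Require Import ring lra.
Set Implicit Arguments. Unset Strict Implicit. Unset Printing Implicit Defensive.
Import Order.TTheory GRing.Theory Num.Theory.
Import measurable_realfun.
Local Open Scope classical_set_scope.
Local Open Scope ring_scope.
Section S.
Context {R : realType}.

Definition hh (y : R) : R := \1_(`[0%R, 2^-1]) y.

Lemma hh_meas : measurable_fun setT hh.
Proof. exact: measurable_realfun.measurable_indic. Qed.

Lemma hh_idem y : hh y * hh y = hh y.
Proof. by rewrite /hh indicE; case: (_ \in _); rewrite ?mulr1 ?mulr0. Qed.

Lemma hh01 y : 0 <= hh y <= 1.
Proof. by rewrite /hh indicE; case: (_ \in _) => /=; rewrite ?lexx ?ler01. Qed.

Lemma int_hh : \int[lebesgue_measure]_(y in unit_itv) hh y = 2^-1.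
Proof.
rewrite /Rintegral /hh integral_indic //; last first.
  exact: measurable_itv.
rewrite setIidl; last first.
  have h1 : (2^-1 : R) <= 1 by lra.
  move=> y; rewrite /= !in_itv /= => /andP[a b]; apply/andP; split; [exact: a| exact: le_trans b h1].
have := @lebesgue_measure_itv R `[0, 2^-1]; rewrite /= lte_fin invr_gt0 ltr0n /= => ->. by rewrite /= oppr0 addr0.
Qed.


Lemma unit_itv_meas : measurable (unit_itv : set R).
Proof. exact: measurable_itv. Qed.

Lemma unit_itv_measR : measurable (unit_itv : set (measurableTypeR R)).
Proof. exact: unit_itv_meas. Qed.

Lemma leb_unit : lebesgue_measure (unit_itv : set R) = 1%E.
Proof.
have := @lebesgue_measure_itv R `[0, 1]; rewrite /= lte_fin ltr01 /= => ->.
by rewrite /= oppr0 addr0.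
Qed.

Lemma int_le1 (g : R -> R) : measurable_fun setT g -> (forall y, 0 <= g y <= 1) ->
  (\int[lebesgue_measure]_(y in unit_itv) (g y)%:E <= 1%:E)%E.
Proof.
move=> mg g01.
have H : (\int[lebesgue_measure]_(y in @unit_itv R) (cst 1%:E y) <= 1%:E)%E.
  have := @integral_cst _ (measurableTypeR R) R lebesgue_measure unit_itv unit_itv_measR 1%E.
  move=> ->; rewrite mul1e le_eqVlt; apply/orP; left; apply/eqP; exact: leb_unit.
apply: le_trans H.
apply: (ge0_le_integral _ unit_itv_measR).
- by move=> y _; rewrite lee_fin; case/andP: (g01 y).
- apply/measurable_EFinP; exact: (measurable_funS measurableT (@subsetT _ _) mg).
- exact: measurable_cst.
- by move=> y _; rewrite lee_fin; case/andP: (g01 y).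
Qed.


Definition ff (w : R * R) : R[i] := (hh w.2 +i* 0)%C.

Lemma csq_ff w : csq (ff w) = hh w.2.
Proof. by rewrite /csq /ff /= !expr2 hh_idem mulr0 addr0. Qed.

Lemma L2ZX_ff : L2ZX ff.
Proof.
split; last first.
  exists 1, set0; split.
    exists set0; split => //; rewrite /mX set0I; exact: measure0.
  move=> x _ _.
  under eq_integral => y _ do rewrite csq_ff /=.
  exact: (int_le1 hh_meas hh01).
split.
  split; rewrite /ff /=.
    apply: measurableT_comp; [exact: hh_meas | exact: measurable_snd].
  exact: measurable_cst.
under eq_integral => w _ do rewrite csq_ff /=.
apply: (@le_lt_trans _ _ (\int[lebesgue_measure \x lebesgue_measure]_(w in @unit_itv R `*` @unit_itv R) (cst 1%:E w))%E).
  apply: ge0_le_integral.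
  - exact: measurableX unit_itv_measR unit_itv_measR.
  - by move=> w _; rewrite lee_fin; case/andP: (hh01 w.2).
  - apply/measurable_EFinP; apply: (measurable_funS measurableT (@subsetT _ _)); apply: measurableT_comp; [exact: hh_meas | exact: measurable_snd].
  - exact: measurable_cst.
  - by move=> w _; rewrite lee_fin; case/andP: (hh01 w.2).
rewrite integral_cst; last exact: measurableX unit_itv_measR unit_itv_measR.
have := @product_measure1E _ _ _ _ R lebesgue_measure lebesgue_measure _ _ unit_itv_measR unit_itv_measR.
move=> E.
apply: (@le_lt_trans _ _ 1%:E); last exact: ltry.
rewrite mul1e le_eqVlt; apply/orP; left; apply/eqP.
apply: etrans E _.
apply: etrans (congr2 (@mule _) leb_unit leb_unit) _.
by rewrite mule1.
Qed.


Lemma Rint0 : \int[lebesgue_measure]_(y in @unit_itv R) (0:R) = 0.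
Proof. by rewrite Rintegral_cst ?mul0r //; exact: unit_itv_measR. Qed.

Lemma condE_ff p : condE ff p = (2^-1 +i* 0)%C.
Proof. by rewrite /condE /ff /= int_hh Rint0. Qed.

Lemma condE_ffc x : condE (fun w => (ff w)^*) x = (2^-1 +i* 0)%C.
Proof. by rewrite /condE /ff /= oppr0 int_hh Rint0. Qed.

Lemma iter_liftX (T0 : R -> R) n w : (iter n (liftX T0) w).2 = w.2.
Proof. by elim: n => //= n ->. Qed.

Lemma condE_lift T0 n x :
  condE (fun w => ff (iter n (liftX T0) w) * (ff w)^*) x = (2^-1 +i* 0)%C.
Proof.
rewrite /condE /ff /=; congr (_ +i* _)%C.
  rewrite -int_hh; apply: eq_Rintegral => y _.
  by rewrite iter_liftX /= -[RHS]hh_idem; ring.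
rewrite -[RHS]Rint0; apply: eq_Rintegral => y _.
ring.
Qed.

Definition rr (T : R * R -> R * R) n x :=
  \int[lebesgue_measure]_(y in @unit_itv R) (hh (iter n T (x, y)).2 * hh y).

Lemma condE_T T n x :
  condE (fun w => ff (iter n T w) * (ff w)^*) x = (rr T n x +i* 0)%C.
Proof.
rewrite /condE /ff /rr /=; congr (_ +i* _)%C.
  apply: eq_Rintegral => y _ /=; ring.
rewrite -[RHS]Rint0; apply: eq_Rintegral => y _.
ring.
Qed.

Lemma csq1 (a b c : R) : csq ((a +i* 0) - (b +i* 0) * (c +i* 0))%C = (a - b * c) ^+ 2.
Proof. rewrite /csq /=; ring. Qed.

Lemma csq2 (a b : R) : csq ((a +i* 0) - (b +i* 0))%C = (a - b) ^+ 2.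
Proof. rewrite /csq /=; ring. Qed.


Lemma meas_iter (T : R * R -> R * R) : measurable_fun setT T -> forall n, measurable_fun setT (iter n T).
Proof.
move=> mT; elim => [|n IH] /=; first exact: measurable_id.
by apply: measurableT_comp; [exact: mT | exact: IH].
Qed.

Lemma meas_rr (T : R * R -> R * R) : measurable_fun setT T -> forall n, measurable_fun setT (rr T n).
Proof.
move=> mT n.
pose G (w : R * measurableTypeR R) := ((hh (iter n T w).2 * hh w.2) * \1_(@unit_itv R) w.2)%:E.
have mG : measurable_fun setT G.
  apply/measurable_EFinP; apply: measurable_funM; [apply: measurable_funM|].
  - apply: measurableT_comp; first exact: hh_meas.
    apply: measurableT_comp; first exact: measurable_snd.
    exact: meas_iter.
  - apply: measurableT_comp; [exact: hh_meas | exact: measurable_snd].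
  - apply: measurableT_comp; [exact: measurable_indic unit_itv_meas | exact: measurable_snd].
have G0 w : (0 <= G w)%E.
  rewrite lee_fin /G; apply: mulr_ge0; [apply: mulr_ge0|].
  - by case/andP: (hh01 (iter n T w).2).
  - by case/andP: (hh01 w.2).
  - by rewrite indicE.
have -> : rr T n = fine \o fubini_F lebesgue_measure G.
  apply/funext => x; rewrite /rr /Rintegral /fubini_F /= integral_mkcond.
  congr fine; apply: eq_integral => y _; rewrite patchE /G /= indicE.
  by case: (y \in unit_itv); rewrite ?mulr1 ?mulr0.
have mF := (@measurable_fun_fubini_tonelli_F _ _ _ _ _ lebesgue_measure G mG G0).
have mfi := (fine_measurable (R:=R) measurableT).
exact: (measurableT_comp mfi mF).
Qed.


Lemma quad (r : R) : 32^-1 <= (r - 2^-1 * 2^-1) ^+ 2 + (r - 2^-1) ^+ 2.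
Proof.
rewrite -subr_ge0.
have -> : (r - 2^-1 * 2^-1) ^+ 2 + (r - 2^-1) ^+ 2 - 32^-1 = 2 * (r - 3 / 8) ^+ 2 by field.
by rewrite mulr_ge0 ?sqr_ge0.
Qed.

Lemma ev (I : nat -> \bar R) (e : R) : 0 < e -> I @ \oo --> 0%E ->
  \forall n \near \oo, (I n < e%:E)%E.
Proof.
move=> e0 /fine_cvgP [Hf Hc].
have Hl := @cvgr_lt _ _ _ _ _ 0 Hc e e0.
case: Hf => N1 _ H1; case: Hl => N2 _ H2.
exists (maxn N1 N2) => // n /= Hn.
have fn := H1 n (leq_trans (leq_maxl _ _) Hn).
have ln := H2 n (leq_trans (leq_maxr _ _) Hn).
by rewrite -(fineK fn) lte_fin.
Qed.

Lemma nk_ge (nk : nat -> nat) : (forall k, (nk k < nk k.+1)%N) -> forall k, (k <= nk k)%N.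
Proof.
move=> H; elim => // k IH; exact: leq_ltn_trans IH (H k).
Qed.

Lemma meas_sq (T : R * R -> R * R) (c : R) n : measurable_fun setT T ->
  measurable_fun (unit_itv : set (measurableTypeR R)) (fun x => ((rr T n x - c) ^+ 2)%:E).
Proof.
move=> mT; apply/measurable_EFinP.
apply: (measurable_funS measurableT (@subsetT _ _)).
apply: measurable_funX; apply: measurable_funB; last exact: measurable_cst.
exact: meas_rr.
Qed.

End S.

Theorem lemma4p2 (R : realType) (T0 : R -> R) :
  inv_mpt mX T0 ->
  forall T : R * R -> R * R,
    strongly_mixing_ext T0 T -> extension T0 T /\ ~ rigid_ext T0 T.
Proof.
move=> _ T [ext mix]; split => //.
case=> _ [nk [nkinc rig]].
have mT : measurable_fun setT T by case: ext => [[[mT _] _] _].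
pose u n x := (rr T n x - 2^-1 * 2^-1) ^+ 2.
pose v n x := (rr T n x - 2^-1) ^+ 2.
have Hm : (fun n => \int[lebesgue_measure]_(x in @unit_itv R) (u n x)%:E)%E @ \oo --> 0%E.
  move: (mix ff ff L2ZX_ff L2ZX_ff); set F := (fun n : nat => _).
  have -> // : F = (fun n => \int[lebesgue_measure]_(x in @unit_itv R) (u n x)%:E)%E.
  apply/funext => n; rewrite /F /L2sqX; apply: eq_integral => x _.
  by rewrite condE_T condE_ff condE_ffc csq1.
have Hr : (fun k => \int[lebesgue_measure]_(x in @unit_itv R) (v (nk k) x)%:E)%E @ \oo --> 0%E.
  move: (rig ff ff L2ZX_ff L2ZX_ff); set F := (fun n : nat => _).
  have -> // : F = (fun k => \int[lebesgue_measure]_(x in @unit_itv R) (v (nk k) x)%:E)%E.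
  apply/funext => n; rewrite /F /L2sqX; apply: eq_integral => x _.
  by rewrite condE_T condE_lift csq2.
have e0 : (0 : R) < 64^-1 by rewrite invr_gt0 ltr0n.
have [N _ HN] := ev e0 Hm.
have [K _ HK] := ev e0 Hr.
pose k := maxn N K.
have A := HN (nk k) (leq_trans (leq_maxl N K) (nk_ge nkinc k)).
have B := HK k (leq_maxr N K).
move: A B; rewrite /=; set m := nk k => A B.
have C : ((32^-1 : R)%:E <= \int[lebesgue_measure]_(x in @unit_itv R) ((u m x)%:E + (v m x)%:E))%E.
  have := @integral_cst _ (measurableTypeR R) R lebesgue_measure unit_itv unit_itv_measR (32^-1 : R)%:E.
  move=> E.
  apply: (@le_trans _ _ (\int[lebesgue_measure]_(x in @unit_itv R) (cst (32^-1:R)%:E x))%E).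
    rewrite E le_eqVlt; apply/orP; left; apply/eqP; apply: esym.
    apply: etrans (congr2 (@mule _) (erefl _) leb_unit) _; exact: mule1.
  apply: ge0_le_integral.
  - exact: unit_itv_measR.
  - by move=> x _; rewrite lee_fin invr_ge0 ler0n.
  - exact: measurable_cst.
  - by apply: emeasurable_funD; apply: meas_sq.
  - move=> x _; rewrite /u /v -EFinD lee_fin /=.
    exact: quad.
rewrite ge0_integralD in C.
- have D := lteD A B.
  have := le_lt_trans C D.
  rewrite -EFinD lte_fin.
  lra.
- exact: unit_itv_measR.
- by move=> x _; rewrite lee_fin sqr_ge0.
- exact: meas_sq.
- by move=> x _; rewrite lee_fin sqr_ge0.
- exact: meas_sq.
Qed.
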